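(* Let $\beta,\delta\in(0,1)$ and a positive integer $L$. For each $i$ consider the batch test $\tilde\phi^i_k=\mathbf 1\{\|\hat w^i_k-w^i_{\mathbf v}\|_1\ge\delta\}$ and the resulting batch test-then-punish profile $\bar{\mathbf s}_{\mathbf v}$, for some feasible payoff $\mathbf v$ with $v^i\ge\underline u^i$ for $i\in[N]$. Writing $\|w^j_{\mathbf v}\|_0=\sum_{\ell=1}^K\mathbf 1\{w^j_{\mathbf v}[a^j(\ell)]\ne0\}$, suppose that $\min_{j\in[N]}\|w^j_{\mathbf v}\|_0>1$ and $\delta<1-1/\min_{j\in[N]}\|w^j_{\mathbf v}\|_0$. Then $\mathbb P^{\bar{\mathbf s}_{\mathbf v}}(\kappa_{\boldsymbol\phi}<\infty)=1$.
   Context: Repeated game: $N$ players, finite pure action sets $\mathcal A^i=\{a^i(1),\dots,a^i(K)\}$, utilities $u^i:\mathcal A\to[0,1]$ extended multilinearly; feasible means $v^i\in\mathrm{conv}(\{u^i(a):a\in\mathcal A\})$. Public histories $h_t=(A_0,\dots,A_{t-1})$ of realized pure action profiles; each round players draw $A^i_t\sim s^i(h_t)$ independently; $\mathbb P^{\mathbf s}$ induced law. A mixed stage Nash equilibrium $\mathbf b$ is fixed, $\underline u^i=u^i(\mathbf b)$; $\mathbf w_{\mathbf v}=(w^1_{\mathbf v},\dots,w^N_{\mathbf v})$ with $u^i(\mathbf w_{\mathbf v})=v^i$. Batches $\mathcal B_k=\{Lk,\dots,L(k+1)-1\}$, $k_t=\lfloor t/L\rfloor$, $\hat w^i_k=L^{-1}(\sum_{t\in\mathcal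 B_k}\mathbf 1\{A^i_t=a^i(\ell)\})_{\ell=1}^K$. $\kappa_{\boldsymbol\phi}=\min_{i}\inf\{k\ge0:\tilde\phi^i_k=1\}$. Batch test-then-punish: $\bar s^j_{\mathbf v}(h_t)=w^j_{\mathbf v}$ if $k_t=0$; for $k_t\ge1$, $w^j_{\mathbf v}$ if $\prod_{k=1}^{k_t-1}\prod_i(1-\tilde\phi^i_k)=1$ and $b^j$ otherwise. *)

(* Defs.v *)
From HB Require Import structures.
From mathcomp Require Import all_boot all_order all_algebra.
From mathcomp Require Import all_classical all_reals all_analysis.
Set Implicit Arguments. Unset Strict Implicit. Unset Printing Implicit Defensive.
Import Order.TTheory GRing.Theory Num.Theory.
Local Open Scope ring_scope.

(* Pure action profiles: player i in 'I_N plays action a^i(l), l in 'I_K. *)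
Definition prof (N K : nat) := {ffun 'I_N -> 'I_K}.

Section Game.
Variables (R : realType) (N K : nat).

Definition is_mixed (x : {ffun 'I_K -> R}) : Prop :=
  (forall l, 0 <= x l) /\ \sum_(l < K) x l = 1.

Definition mlin (u : prof N K -> R) (s : 'I_N -> {ffun 'I_K -> R}) : R :=
  \sum_(a : prof N K) (\prod_(j < N) s j (a j)) * u a.

Definition dev (s : 'I_N -> {ffun 'I_K -> R}) (i : 'I_N) (x : {ffun 'I_K -> R})
  : 'I_N -> {ffun 'I_K -> R} := fun j => if j == i then x else s j.

Definition is_stage_NE (u : 'I_N -> prof N K -> R) (s : 'I_N -> {ffun 'I_K -> R}) : Prop :=
  (forall j, is_mixed (s j)) /\
  forall i x, is_mixed x -> mlin (u i) (dev s i x) <= mlin (u i) s.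

Definition feasible (u : 'I_N -> prof N K -> R) (v : 'I_N -> R) : Prop :=
  forall i, exists lam : {ffun prof N K -> R},
    [/\ forall a, 0 <= lam a, \sum_(a : prof N K) lam a = 1 &
        v i = \sum_(a : prof N K) lam a * u i a].

Definition norm0 (x : {ffun 'I_K -> R}) : nat := #|[pred l | x l != 0]|.

Variables (L : nat) (delta : R) (w b : 'I_N -> {ffun 'I_K -> R}).

Definition hatw (h : seq (prof N K)) (i : 'I_N) (k : nat) (l : 'I_K) : R :=
  (\sum_(L * k <= t < L * k.+1)
      (if onth h t is Some a then ((a i == l) : nat)%:R else 0)) / L%:R.

Definition phi (h : seq (prof N K)) (i : 'I_N) (k : nat) : bool :=
  delta <= \sum_(l < K) `|hatw h i k l - w i l|.

(* batch test-then-punish profile; h is the history h_t, t = size h *)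
Definition sbar (h : seq (prof N K)) (j : 'I_N) : {ffun 'I_K -> R} :=
  let kt := (size h %/ L)%N in
  if kt == 0%N then w j
  else if [forall i, all (fun k => ~~ phi h i k) (iota 1 kt.-1)] then w j
  else b j.

End Game.

Definition hist (Omega : Type) N K (A : nat -> Omega -> prof N K) (om : Omega) (t : nat)
  : seq (prof N K) := [seq A s om | s <- iota 0 t].

(* A is distributed according to P^s: players draw independently from s^i(h_t) *)
Definition induces (R : realType) (d : measure_display) (Omega : measurableType d)
  (P : probability Omega R) N K (A : nat -> Omega -> prof N K)
  (s : seq (prof N K) -> 'I_N -> {ffun 'I_K -> R}) : Prop :=
  forall h : seq (prof N K),
    P [set om : Omega | hist A om (size h) = h]%classic =
    (\prod_(t < size h) \prod_(i < N) s (take t h) i (tnth (in_tuple h) t i))%:E.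

Definition kappa_finite (Omega : Type) (R : realType) N K L (delta : R)
  (w : 'I_N -> {ffun 'I_K -> R}) (A : nat -> Omega -> prof N K) : set Omega :=
  [set om : Omega | exists k : nat, [exists i : 'I_N, phi L delta w (hist A om (L * k.+1)) i k]]%classic.

(* Main.v *)
Require Import Defs.
From HB Require Import structures.
From mathcomp Require Import all_boot all_order all_algebra.
From mathcomp Require Import all_classical all_reals all_analysis.
From mathcomp Require Import zify ring lra.
Import Order.TTheory GRing.Theory Num.Theory.
Set Implicit Arguments. Unset Strict Implicit. Unset Printing Implicit Defensive.
Local Open Scope ring_scope.

Section Comb.
Variables (R : realType) (N K L : nat) (delta : R) (w b : 'I_N -> {ffun 'I_K -> R}).
Local Notation X := (prof N K).
Local Notation sb := (sbar L delta w b).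
Local Notation ph := (phi L delta w).

Fixpoint ext (j : nat) (F : seq X -> R) (h : seq X) : R :=
  if j is j'.+1 then \sum_(a : X) ext j' F (rcons h a) else F h.

Lemma extD i j F h : ext (i + j) F h = ext i (ext j F) h.
Proof.
elim: i h => [|i IH] h //=.
by apply: eq_bigr => a _; exact: IH.
Qed.

Lemma ext_le j F G h : (forall g, size g = (size h + j)%N -> F g <= G g) ->
  ext j F h <= ext j G h.
Proof.
elim: j h => [|j IH] h H /=; first by apply: H; rewrite addn0.
apply: ler_sum => a _; apply: IH => g Hg; apply: H.
by rewrite Hg size_rcons addSnnS.
Qed.

Lemma extZ j c F h : ext j (fun g => c * F g) h = c * ext j F h.
Proof.
elim: j h => [|j IH] h //=; rewrite mulr_sumr.
by apply: eq_bigr => a _; exact: IH.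
Qed.

Definition W (h : seq X) : R :=
  \prod_(t < size h) \prod_(i < N) sb (take t h) i (tnth (in_tuple h) t i).

Lemma W_nth x0 h : W h = \prod_(t < size h) \prod_(i < N) sb (take t h) i (nth x0 h t i).
Proof. by apply: eq_bigr => t _; rewrite (tnth_nth x0). Qed.

Lemma W_rcons h a : W (rcons h a) = W h * \prod_(i < N) sb h i (a i).
Proof.
rewrite !(W_nth a) size_rcons big_ord_recr /=; congr (_ * _).
  apply: eq_bigr => t _; apply: eq_bigr => i _.
  rewrite nth_rcons ltn_ord -cats1 takel_cat //.
  exact: ltnW.
by rewrite -cats1 take_size_cat // nth_cat ltnn subnn.
Qed.

Lemma W_nil : W [::] = 1.
Proof. by rewrite /W big_ord0. Qed.

Lemma W_ge0 h : (forall j l, 0 <= w j l) -> (forall j l, 0 <= b j l) -> 0 <= W h.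
Proof.
move=> hw hb; apply: prodr_ge0 => t _; apply: prodr_ge0 => i _.
rewrite /sbar; case: ifP => _ //; case: ifP => _ //.
Qed.

Definition mu (a : X) : R := \prod_(i < N) w i (a i).

Lemma sum_mu : (forall j, \sum_(l < K) w j l = 1) -> \sum_(a : X) mu a = 1.
Proof.
move=> hs; rewrite /mu -(bigA_distr_bigA (fun i l => w i l)) /=.
by rewrite big1 // => i _; rewrite hs.
Qed.

Lemma sum_mu0 i0 l0 : (forall j, \sum_(l < K) w j l = 1) ->
  \sum_(a : X) (a i0 == l0)%:R * mu a = w i0 l0.
Proof.
move=> hs.
pose F := fun (i : 'I_N) (l : 'I_K) => if i == i0 then (l == l0)%:R * w i l else w i l.
transitivity (\sum_(a : X) \prod_(i < N) F i (a i)).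
  apply: eq_bigr => a _; rewrite /mu (bigD1 i0) //= [RHS](bigD1 i0) //= /F eqxx mulrA.
  congr (_ * _); apply: eq_bigr => i Hi; by rewrite (negbTE Hi).
rewrite -(bigA_distr_bigA F) /= (bigD1 i0) //= [X in _ * X]big1 ?mulr1; last first.
  by move=> i Hi; rewrite /F (negbTE Hi) hs.
rewrite /F eqxx (bigD1 l0) //= eqxx mul1r big1 ?addr0 // => l Hl.
by rewrite (negbTE Hl) mul0r.
Qed.

Definition G (n : nat) (h : seq X) : bool :=
  [forall k : 'I_n, [forall i : 'I_N, ~~ ph (take (L * k.+1) h) i k]].

Lemma phi_take h M i k : (L * k.+1 <= M)%N -> ph (take M h) i k = ph h i k.
Proof.
move=> HM; rewrite /phi /hatw; congr (_ <= _); apply: eq_bigr => l _.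
congr (`|_ - _|); congr (_ / _); apply: eq_big_nat => t /andP[_ ht].
rewrite !onthE map_take nth_take //.
exact: leq_trans ht HM.
Qed.

Lemma sbar_w n h1 : (0 < L)%N -> (L * n <= size h1)%N -> (size h1 < L * n.+1)%N ->
  G n (take (L * n) h1) -> forall j, sb h1 j = w j.
Proof.
move=> L0 H1 H2 HG j; rewrite /sbar.
have -> : (size h1 %/ L = n)%N.
  rewrite -(subnKC H1) mulnC divnMDl // divn_small ?addn0 //; rewrite mulnC.
  by rewrite ltn_subLR // -mulnSr.
case: ifP => // n0; case: ifP => // /negP[]; apply/forallP => i.
apply/allP => k; rewrite mem_iota => /andP[k1 kn].
have kn' : (k < n)%N by move: kn; rewrite add1n prednK // lt0n n0.
move/forallP: HG => /(_ (Ordinal kn')) /forallP /(_ i) /=.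
rewrite take_takel ?leq_mul2l ?kn' ?orbT // phi_take //.
Qed.


Section Block.
Variables (n : nat) (i0 : 'I_N) (l0 : 'I_K).
Hypotheses (L0 : (0 < L)%N) (hw0 : forall j l, 0 <= w j l) (hb0 : forall j l, 0 <= b j l)
  (hs : forall j, \sum_(l < K) w j l = 1) (hd : delta < 1 - w i0 l0) (hc1 : w i0 l0 <= 1).

Definition allL0 (h : seq X) := all (fun a : X => a i0 == l0) (drop (L * n) h).

Lemma hatw_one h : size h = (L * n.+1)%N -> allL0 h -> hatw R L h i0 n l0 = 1.
Proof.
move=> Hs HA; rewrite /hatw.
rewrite (eq_big_nat _ _ (F2 := fun _ => 1)).
  rewrite sumr_const_nat mulnSr addKn divff // pnatr_eq0 -lt0n //.
move=> t /andP[t1 t2].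
have ts : (t < size h)%N by rewrite Hs.
pose x0 : X := [ffun => l0].
rewrite onthE (nth_map x0) //.
have : nth x0 h t \in drop (L * n) h.
  rewrite -(subnKC t1) -nth_drop; apply: mem_nth.
  by rewrite size_drop ltn_sub2rE.
by move/(allP HA) => /eqP ->; rewrite eqxx.
Qed.

Lemma phi_all h : size h = (L * n.+1)%N -> allL0 h -> ph h i0 n.
Proof.
move=> Hs HA; rewrite /phi (bigD1 l0) //= hatw_one //.
apply: le_trans (ltW hd) _; rewrite ger0_norm ?subr_ge0 //.
by rewrite lerDl sumr_ge0.
Qed.

Local Notation F := (fun h => (G n.+1 h)%:R * W h).

Lemma block j h1 : (size h1 + j = L * n.+1)%N -> (L * n <= size h1)%N ->
  ext j F h1 <= (G n (take (L * n) h1))%:R * W h1 * (1 - (allL0 h1)%:R * (w i0 l0) ^+ j).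
Proof.
elim: j h1 => [|j IH] h1 Hs Hn /=.
  rewrite addn0 in Hs.
  case Gn1: (G n.+1 h1).
    have Gn : G n (take (L * n) h1).
      apply/forallP => k; apply/forallP => i.
      move/forallP: Gn1 => /(_ (widen_ord (leqnSn n) k)) /forallP /(_ i) /=.
      by rewrite take_takel // leq_mul2l ltn_ord orbT.
    have nA : allL0 h1 = false.
      apply/negP => HA; move/forallP: Gn1 => /(_ ord_max) /forallP /(_ i0) /=.
      by rewrite take_oversize ?Hs // phi_all.
    by rewrite Gn nA /= mul1r mul0r subr0 mulr1.
  rewrite /= mul0r; apply: mulr_ge0; first by apply: mulr_ge0 => //; exact: W_ge0.
  by rewrite expr0 mulr1 subr_ge0; case: (allL0 h1).
have Hlt : (size h1 < L * n.+1)%N by rewrite -Hs addnS ltnS leq_addr.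
have HS : forall a, (size (rcons h1 a) + j)%N = (L * n.+1)%N.
  by move=> a; rewrite size_rcons addSnnS.
have HN : forall a, (L * n <= size (rcons h1 a))%N.
  by move=> a; rewrite size_rcons; apply: leqW.
apply: le_trans (ler_sum _ (fun a _ => IH (rcons h1 a) (HS a) (HN a))) _.
have Et : forall a, take (L * n) (rcons h1 a) = take (L * n) h1.
  by move=> a; rewrite -cats1 takel_cat.
under eq_bigr => a _ do rewrite Et.
case Gn: (G n (take (L * n) h1)); last first.
  by rewrite big1 ?mul0r // => a _; rewrite /= !mul0r.
have Hsb := sbar_w L0 Hn Hlt Gn.
under eq_bigr => a _ do rewrite W_rcons /allL0 drop_rcons // all_rcons -/(allL0 h1).
rewrite /= mul1r.
have Hmu : forall a : X, \prod_(i < N) sb h1 i (a i) = mu a.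
  by move=> a; apply: eq_bigr => i _; rewrite Hsb.
under eq_bigr => a _ do rewrite mul1r Hmu.
case: (allL0 h1).
  rewrite (eq_bigr (fun a : X => W h1 * mu a - (W h1 * w i0 l0 ^+ j) * ((a i0 == l0)%:R * mu a))); last first.
    by move=> a _; rewrite andbT; ring.
  rewrite sumrB -!mulr_sumr sum_mu // sum_mu0 // exprSr.
  rewrite le_eqVlt; apply/orP; left; apply/eqP. rewrite mul1r; ring.
under eq_bigr => a _ do rewrite andbF mul0r subr0 mulr1.
by rewrite -mulr_sumr sum_mu // mul0r subr0 mulr1.
Qed.

Lemma V_step : ext (L * n.+1) F [::] <=
  (1 - w i0 l0 ^+ L) * ext (L * n) (fun h => (G n h)%:R * W h) [::].
Proof.
rewrite mulnSr extD -extZ; apply: ext_le => g /= Hg; rewrite add0n in Hg.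
apply: le_trans (@block L g _ _) _; first by rewrite Hg mulnSr.
  by rewrite Hg.
rewrite take_oversize ?Hg // /allL0 drop_oversize ?Hg //= mul1r.
by rewrite mulrC.
Qed.

End Block.

Lemma V_bound i0 l0 : (0 < L)%N -> (forall j l, 0 <= w j l) -> (forall j l, 0 <= b j l) ->
  (forall j, \sum_(l < K) w j l = 1) -> delta < 1 - w i0 l0 -> w i0 l0 <= 1 ->
  forall n, ext (L * n) (fun h => (G n h)%:R * W h) [::] <= (1 - w i0 l0 ^+ L) ^+ n.
Proof.
move=> L0 hw0 hb0 hs hd hc1; elim=> [|n IH].
  by rewrite muln0 /= W_nil mulr1 expr0; case: (G 0 [::]); rewrite ?ler01 ?lexx.
have hc0 : 0 <= 1 - w i0 l0 ^+ L by rewrite subr_ge0 exprn_ile1.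
apply: le_trans (@V_step n i0 l0 L0 hw0 hb0 hs hd hc1) _.
by rewrite exprS ler_wpM2l.
Qed.
End Comb.

Lemma bigsetU_seqP (T : Type) (I : eqType) (r : seq I) (F : I -> set T) x :
  (\big[setU/set0]_(i <- r) F i) x <-> exists i, i \in r /\ F i x.
Proof.
elim: r => [|y r IH]; first by rewrite big_nil; split => [[]|[i []]].
rewrite big_cons; split.
  case=> [Hy|/IH [i [Hi Hx]]]; first by exists y; rewrite mem_head.
  by exists i; rewrite in_cons Hi orbT.
case=> i []; rewrite in_cons => /orP[/eqP ->|Hi] Hx; first by left.
by right; apply/IH; exists i.
Qed.

Lemma geo0 (R : realType) (q r : R) : 0 <= q -> q < 1 -> (forall n, r <= q ^+ n) -> r <= 0.
Proof.
move=> q0 q1 Hr; set c := 1 - q.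
have c0 : 0 < c by rewrite subr_gt0.
have B : forall n, q ^+ n * (1 + n%:R * c) <= 1.
  elim=> [|n IH]; first by rewrite expr0 mul0r addr0 mulr1.
  have x0 : 0 <= q ^+ n by apply: exprn_ge0.
  have n0 : 0 <= n%:R :> R by [].
  have H : 0 <= q ^+ n * (c ^+ 2 * (n%:R + 1)).
    by apply: mulr_ge0 => //; apply: mulr_ge0; [apply: exprn_ge0; apply: ltW|lra].
  rewrite exprS -natr1 /c.
  rewrite /c in IH H; nra.
rewrite leNgt; apply/negP => r0.
have rc : 0 < r * c by apply: mulr_gt0.
pose n := Num.Def.archi_bound (r * c)^-1.
have Hn : (r * c)^-1 < n%:R by apply: archi_boundP; rewrite invr_ge0 ltW.
have := le_trans (ler_wpM2r _ (Hr n)) (B n).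
have h1 : 0 <= 1 + n%:R * c by rewrite addr_ge0 // mulr_ge0 // ltW.
move=> /(_ h1).
have E : r * c * (r * c)^-1 = 1 by rewrite mulfV // gt_eqF.
have : 1 < r * c * n%:R by nra.
nra.
Qed.

Section Prob.
Variables (R : realType) (N K L : nat) (delta : R) (w b : 'I_N -> {ffun 'I_K -> R}).
Variables (d : measure_display) (Omega : measurableType d) (P : probability Omega R)
  (A : nat -> Omega -> prof N K).
Local Notation X := (prof N K).
Hypothesis hA : forall t (a : prof N K), measurable [set om : Omega | A t om = a]%classic.
Hypothesis hind : induces P A (sbar L delta w b).

Lemma size_hist om m : size (hist A om m) = m.
Proof. by rewrite size_map size_iota. Qed.

Lemma hist_rcons om m : hist A om m.+1 = rcons (hist A om m) (A m om).
Proof. by rewrite /hist -addn1 iotaD map_cat /= add0n cats1. Qed.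

Lemma hist_take om k m : (k <= m)%N -> take k (hist A om m) = hist A om k.
Proof. by move=> km; rewrite /hist -map_take take_iota (minn_idPl km). Qed.

Lemma meas_hist m (S : pred (seq X)) : measurable [set om | S (hist A om m)]%classic.
Proof.
elim: m S => [|m IH] S.
  case HS: (S [::]).
    rewrite (_ : [set om | _]%classic = setT); first exact: measurableT.
    by apply/seteqP; split => om //= _; rewrite HS.
  rewrite (_ : [set om | _]%classic = set0); first exact: measurable0.
  by apply/seteqP; split => om //=; rewrite HS.
rewrite (_ : [set om | _]%classic = \big[setU/set0]_(a <- index_enum X)
   ([set om | A m om = a] `&` [set om | (fun h => S (rcons h a)) (hist A om m)]))%classic.
  by apply: bigsetU_measurable => a _; apply: measurableI => //; exact: (IH (fun h => S (rcons h a))).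
apply/seteqP; split => om /=.
  move=> HS; apply/bigsetU_seqP; exists (A m om); split.
    by rewrite mem_index_enum.
  by split => //=; rewrite -hist_rcons.
by move/bigsetU_seqP => [a [_ [/= <-]]] /=; rewrite hist_rcons.
Qed.

Lemma add_fin (r : seq X) (F : X -> set Omega) : uniq r -> (forall a, measurable (F a)) ->
  (forall a a', a != a' -> F a `&` F a' = set0)%classic ->
  P (\big[setU/set0]_(a <- r) F a) = \sum_(a <- r) P (F a).
Proof.
move=> + mF dF; elim: r => [|y r IH]; first by rewrite !big_nil measure0.
move=> /= /andP[yr ur]; rewrite !big_cons measureU //; first by congr (_ + _); exact: IH.
  by apply: bigsetU_measurable.
rewrite -subset0 => om [Hy /bigsetU_seqP [a [Ha Hom]]].
have ya : y != a by apply: contraNneq yr => ->.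
by have := dF _ _ ya; rewrite -subset0; apply; split.
Qed.

Definition Cyl (h0 : seq X) j (S : pred (seq X)) :=
  [set om | hist A om (size h0) = h0 /\ S (hist A om (size h0 + j))]%classic.

Lemma meas_Cyl h0 j S : measurable (Cyl h0 j S).
Proof.
rewrite (_ : Cyl h0 j S = [set om | (fun h => (take (size h0) h == h0) && S h)
   (hist A om (size h0 + j))]%classic).
  exact: (meas_hist _ (fun h => (take (size h0) h == h0) && S h)).
apply/seteqP; split => om /=; rewrite hist_take ?leq_addr //.
  by case=> -> ->; rewrite eqxx.
by case/andP => /eqP.
Qed.

Lemma prob_Cyl S j h0 :
  P (Cyl h0 j S) = (ext j (fun h => (S h)%:R * W L delta w b h) h0)%:E.
Proof.
elim: j h0 => [|j IH] h0 /=.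
  case HS: (S h0).
    rewrite (_ : Cyl h0 0 S = [set om | hist A om (size h0) = h0]%classic).
      by rewrite hind mul1r.
    apply/seteqP; split => om /=; first by case.
    by move=> E; rewrite /Cyl /= addn0 E.
  rewrite (_ : Cyl h0 0 S = set0); first by rewrite measure0 mul0r.
  apply/seteqP; split => om //=; rewrite /Cyl /= addn0 => -[E]; by rewrite E HS.
rewrite (_ : Cyl h0 j.+1 S = \big[setU/set0]_(a <- index_enum X) Cyl (rcons h0 a) j S).
  rewrite add_fin ?index_enum_uniq //; last 2 first.
  - by move=> a; apply: meas_Cyl.
  - move=> a a' aa; rewrite -subset0 => om [[E1 _] [E2 _]].
    move: E1 E2; rewrite !size_rcons => -> /(congr1 (last a)); rewrite !last_rcons => Ea.
    by move: aa; rewrite Ea eqxx.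
  by rewrite -sumEFin; apply: eq_bigr => a _; rewrite IH.
apply/seteqP; split => om /=.
  case=> E HS; apply/bigsetU_seqP; exists (A (size h0) om); split.
    by rewrite mem_index_enum.
  by rewrite /Cyl /= size_rcons hist_rcons E addSnnS.
move/bigsetU_seqP => [a [_ []]]; rewrite /Cyl /= size_rcons hist_rcons => /(congr1 (take (size h0))).
rewrite -!cats1 !take_size_cat ?size_hist // => E HS; split => //.
by rewrite -addSnnS.
Qed.

End Prob.

Unset Implicit Arguments.
Set Strict Implicit.

Theorem mainTheorem10 (R : realType) (d : measure_display) (Omega : measurableType d)
  (P : probability Omega R) (N K L : nat)
  (u : 'I_N -> prof N K -> R) (b w : 'I_N -> {ffun 'I_K -> R}) (v : 'I_N -> R)
  (beta delta : R) (A : nat -> Omega -> prof N K) :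
  0 < beta < 1 -> 0 < delta < 1 -> (0 < L)%N -> (0 < N)%N ->
  is_stage_NE u b ->
  feasible u v ->
  (forall i, mlin (u i) b <= v i) ->
  (forall j, is_mixed (w j)) ->
  (forall i, mlin (u i) w = v i) ->
  (1 < \big[minn/K]_(j < N) norm0 (w j))%N ->
  delta < 1 - ((\big[minn/K]_(j < N) norm0 (w j))%:R)^-1 ->
  (forall t (a : prof N K), measurable [set om : Omega | A t om = a]%classic) ->
  induces P A (sbar L delta w b) ->
  P (kappa_finite L delta w A) = 1%E.
Proof.
move=> /andP[beta0 beta1] /andP[d0 d1] L0 N0 [hbm _] _ _ hwm _ Hm1 Hd hA hind.
have hw0 : forall j l, 0 <= w j l := fun j l => (hwm j).1 l.
have hs : forall j, \sum_(l < K) w j l = 1 := fun j => (hwm j).2.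
have hb0 : forall j l, 0 <= b j l := fun j l => (hbm j).1 l.
pose i0 : 'I_N := Ordinal N0.
set m := \big[minn/K]_(j < N) norm0 (w j) in Hm1 Hd.
have mle : (m <= norm0 (w i0))%N.
  rewrite /m; have : i0 \in index_enum 'I_N by rewrite mem_index_enum.
  elim: (index_enum 'I_N) => [//|y r IH]; rewrite in_cons big_cons => /orP[/eqP <-|Hr].
    exact: geq_minl.
  by apply: leq_trans (geq_minr _ _) (IH Hr).
have [l1 Hl1] : exists l, w i0 l != 0.
  case: (pickP (fun l => w i0 l != 0)) => [l Hl|H0]; first by exists l.
  exfalso; move: (hs i0); rewrite big1 => [/eqP|l _]; first by rewrite eq_sym oner_eq0.
  by move: (H0 l) => /negbFE/eqP.
pose l0 := [arg min_(l < l1 | w i0 l != 0) w i0 l]%O.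
have [Hl0 Hmin] : w i0 l0 != 0 /\ forall l, w i0 l != 0 -> w i0 l0 <= w i0 l.
  by rewrite /l0; case: arg_minP => // l Hl H; split=> // l' Hl'; exact: H.
have c0pos : 0 < w i0 l0 by rewrite lt0r Hl0 hw0.
have Hn0 : w i0 l0 * (norm0 (w i0))%:R <= 1.
  rewrite mulr_natr /norm0 -sumr_const.
  apply: (@le_trans _ _ (\sum_(l < K | w i0 l != 0) w i0 l)).
    by apply: ler_sum => l Hl; exact: Hmin.
  rewrite -(hs i0) [X in _ <= X](bigID (fun l => w i0 l != 0)) /=.
  rewrite [X in _ <= _ + X]big1 ?addr0 //.
  by move=> l /negPn /eqP.
have m0 : (0 < m)%N by apply: ltnW.
have cm : w i0 l0 <= (m%:R)^-1.
  rewrite -div1r ler_pdivlMr ?ltr0n //; apply: le_trans Hn0.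
  by rewrite ler_wpM2l ?hw0 // ler_nat.
have hd : delta < 1 - w i0 l0 by apply: lt_le_trans Hd _; rewrite lerD2l lerN2.
have hc1 : w i0 l0 <= 1 by lra.
set q := 1 - w i0 l0 ^+ L.
have q0 : 0 <= q by rewrite subr_ge0 exprn_ile1 ?hw0.
have q1 : q < 1 by rewrite /q; have := exprn_gt0 L c0pos; lra.
set kap := kappa_finite L delta w A.
have mkap : measurable kap.
  rewrite (_ : kap = (\bigcup_(k : nat) [set om | (fun h => [exists i, phi L delta w h i k]) (hist A om (L * k.+1))])%classic).
    apply: bigcupT_measurable => k.
    exact: (meas_hist hA _ (fun h => [exists i, phi L delta w h i k])).
  by apply/seteqP; split => om /=; [case=> k Hk; exists k | case=> k _ Hk; exists k].
have sub : forall n, (~` kap `<=` Cyl A [::] (L * n) (G L delta w n))%classic.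
  move=> n om /= Hk; rewrite /Cyl /=; split => //.
  apply/forallP => k; apply/forallP => i; apply/negP => Hph; apply: Hk; exists k.
  apply/existsP; exists i.
  by rewrite hist_take ?add0n ?leq_mul2l ?ltn_ord ?orbT in Hph.
have bound : forall n : nat, (P (~` kap)%classic <= (q ^+ n)%:E)%E.
  move=> n; apply: le_trans (le_measure _ _ _ (sub n)) _; rewrite ?inE.
  - exact: measurableC.
  - exact: meas_Cyl.
  change (P (Cyl A [::] (L * n) (G L delta w n)) <= (q ^+ n)%:E)%E.
  rewrite (prob_Cyl hA hind (G L delta w n) (L * n) [::]) lee_fin.
  exact: (V_bound L0 hw0 hb0 hs hd hc1).
have z : P (~` kap)%classic = 0%E.
  apply/eqP; rewrite eq_le measure_ge0 andbT.
  move: (measure_ge0 P (~` kap)%classic) bound.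
  case: (P (~` kap)%classic) => [r| |] //= r0 Hb.
    rewrite lee_fin; apply: (geo0 q0 q1) => n; by rewrite -lee_fin.
  by move: (Hb 0%N).
by rewrite -(setCK kap) probability_setC ?z ?sube0 //; exact: measurableC.
Qed.
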